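(* Let $(\psi_1;\phi_1,\phi_2)\in\mathbb{R}^3$ be coordinates on the coroot space of the semisimple Lie algebra $\mathrm{A}_1\oplus\mathrm{A}_2$ (basis of fundamental coroots), and consider the open dual fundamental Weyl chamber $$W=\{\psi_1>0,\ 2\phi_1-\phi_2>0,\ -\phi_1+2\phi_2>0\}.$$ Consider the hyperplane arrangement $\mathrm{I}(\mathrm{A}_1\oplus\mathrm{A}_2,(\mathbf{1},\mathbf{3})\oplus(\mathbf{2},\mathbf{3}))$ inside $W$, i.e. the arrangement of the hyperplanes $\{\phi:\ \varpi\cdot\phi=0\}$ for $\varpi$ ranging over the weights of $(\mathbf{1},\mathbf{3})\oplus(\mathbf{2},\mathbf{3})$. Then this arrangement has exactly eight chambers (connected components of the complement of the hyperplanes in $W$). With respect to the ordered list of linear forms $$\big(-\phi_1+\phi_2,\ -\psi_1-\phi_1+\phi_2,\ -\psi_1+\phi_1,\ \psi_1-\phi_2,\ \psi_1-\phi_1+\phi_2\big)$$ (these are the forms $\varpi\cdot\phi$ for the weights $(0;-1,1)$, $(-1;-1,1)$, $(-1;1,0)$, $(1;0,-1)$, $(1;-1,1)$), the eight chambers have the following sign vectors and explicit descriptions: - $1$: $(+,-,-,+,+)$, $0<\phi_2-\phi_1<\phi_1<\phi_2<\psi_1$; - $2$: $(+,-,-,-,+)$, $0<\phi_2-\phi_1<\phi_1<\psi_1<\phi_2$; - $3$: $(+,-,+,-,+)$, $0<\phi_2-\phi_1<\psi_1<\phi_1<\phi_2$; - $4$: $(+,+,+,-,+)$, $0<\psi_1<\phi_2-\phi_1<\phi_1<\phi_2$;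 - $1'$: $(-,-,-,+,+)$, $0<\phi_1-\phi_2<\phi_2<\phi_1<\psi_1$; - $2'$: $(-,-,+,+,+)$, $0<\phi_1-\phi_2<\phi_2<\psi_1<\phi_1$; - $3'$: $(-,-,+,-,+)$, $0<\phi_1-\phi_2<\psi_1<\phi_2<\phi_1$; - $4'$: $(-,-,+,-,-)$, $0<\psi_1<\phi_1-\phi_2<\phi_2<\phi_1$. The adjacency graph of the chambers (two chambers adjacent when they share a codimension-one wall) is the hexagon $1-2-3-3'-2'-1'-1$ together with the two extra edges $3-4$ and $3'-4'$.
   Context: Weights are written $(a;b,c)$ where $(a)$ is a weight of $\mathrm{A}_1$ and $(b,c)$ a weight of $\mathrm{A}_2$, both in the basis of fundamental weights; the pairing of a weight $\varpi=(a;b,c)$ with $\phi=(\psi_1;\phi_1,\phi_2)$ is $\varpi\cdot\phi=a\psi_1+b\phi_1+c\phi_2$. The weights of the fundamental $\mathbf{2}$ of $\mathrm{A}_1$ are $1,-1$; those of the fundamental $\mathbf{3}$ of $\mathrm{A}_2$ are $(1,0),(-1,1),(0,-1)$. Hence the weights of $(\mathbf{1},\mathbf{3})$ are $(0;1,0),(0;-1,1),(0;0,-1)$ and those of the bifundamental $(\mathbf{2},\mathbf{3})$ are $(\pm1;1,0),(\pm1;-1,1),(\pm1;0,-1)$. *)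

(* Defs.v *)
From HB Require Import structures.
From mathcomp Require Import all_boot all_order all_algebra.
From mathcomp Require Import all_classical all_reals all_analysis.
Set Implicit Arguments. Unset Strict Implicit. Unset Printing Implicit Defensive.
Import Order.TTheory GRing.Theory Num.Theory.
Local Open Scope ring_scope.
Import numFieldNormedType.Exports.
Local Open Scope classical_set_scope.

Section Arrangement.
Variable R : realType.

Notation pt := (R * R * R)%type.
Definition psi1 (x : pt) : R := x.1.1.
Definition phi1 (x : pt) : R := x.1.2.
Definition phi2 (x : pt) : R := x.2.

(* weight (a;b,c) in the fundamental-weight basis *)
Definition weight := (int * int * int)%type.

Definition pairing (w : weight) (x : pt) : R :=
  w.1.1%:~R * psi1 x + w.1.2%:~R * phi1 x + w.2%:~R * phi2 x.

(* weights of (1,3) (+) (2,3) *)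
Definition weights_R : seq weight :=
  [:: (0, 1, 0); (0, -1, 1); (0, 0, -1);
      (1, 1, 0); (1, -1, 1); (1, 0, -1);
      (-1, 1, 0); (-1, -1, 1); (-1, 0, -1)]%Z.

Definition Weyl : set pt :=
  [set x | 0 < psi1 x /\ 0 < 2 * phi1 x - phi2 x /\ 0 < - phi1 x + 2 * phi2 x].

Definition complement : set pt :=
  Weyl `&` [set x | forall w, w \in weights_R -> pairing w x != 0].

Definition is_chamber (K : set pt) : Prop :=
  exists2 x, complement x & K = connected_component complement x.

Definition lin (a q : pt) : R :=
  a.1.1 * q.1.1 + a.1.2 * q.1.2 + a.2 * q.2.

(* Two chambers are adjacent when they are distinct and share a
   codimension-one wall: the intersection of their closures contains a
   relatively open piece of an affine plane. *)
Definition chambers_adjacent (K1 K2 : set pt) : Prop :=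
  K1 <> K2 /\
  exists (a : pt) (c : R) (p : pt),
    a <> (0, 0, 0) /\ lin a p = c /\
    \forall q \near p, lin a q = c -> (closure K1 `&` closure K2) q.

End Arrangement.

Inductive label := L1 | L2 | L3 | L4 | L1' | L2' | L3' | L4'.

Definition chamber_of (R : realType) (l : label) : set (R * R * R)%type :=
  match l with
  | L1  => [set x | 0 < phi2 x - phi1 x /\ phi2 x - phi1 x < phi1 x /\ phi1 x < phi2 x /\ phi2 x < psi1 x]
  | L2  => [set x | 0 < phi2 x - phi1 x /\ phi2 x - phi1 x < phi1 x /\ phi1 x < psi1 x /\ psi1 x < phi2 x]
  | L3  => [set x | 0 < phi2 x - phi1 x /\ phi2 x - phi1 x < psi1 x /\ psi1 x < phi1 x /\ phi1 x < phi2 x]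
  | L4  => [set x | 0 < psi1 x /\ psi1 x < phi2 x - phi1 x /\ phi2 x - phi1 x < phi1 x /\ phi1 x < phi2 x]
  | L1' => [set x | 0 < phi1 x - phi2 x /\ phi1 x - phi2 x < phi2 x /\ phi2 x < phi1 x /\ phi1 x < psi1 x]
  | L2' => [set x | 0 < phi1 x - phi2 x /\ phi1 x - phi2 x < phi2 x /\ phi2 x < psi1 x /\ psi1 x < phi1 x]
  | L3' => [set x | 0 < phi1 x - phi2 x /\ phi1 x - phi2 x < psi1 x /\ psi1 x < phi2 x /\ phi2 x < phi1 x]
  | L4' => [set x | 0 < psi1 x /\ psi1 x < phi1 x - phi2 x /\ phi1 x - phi2 x < phi2 x /\ phi2 x < phi1 x]
  end.

Definition sign_forms : seq weight :=
  [:: (0, -1, 1); (-1, -1, 1); (-1, 1, 0); (1, 0, -1); (1, -1, 1)]%Z.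

(* sign vectors (true = +, false = -) *)
Definition sign_vector (l : label) : seq bool :=
  match l with
  | L1  => [:: true; false; false; true; true]
  | L2  => [:: true; false; false; false; true]
  | L3  => [:: true; false; true; false; true]
  | L4  => [:: true; true; true; false; true]
  | L1' => [:: false; false; false; true; true]
  | L2' => [:: false; false; true; true; true]
  | L3' => [:: false; false; true; false; true]
  | L4' => [:: false; false; true; false; false]
  end.

Definition edge0 (l m : label) : bool :=
  match l, m with
  | L1, L2 | L2, L3 | L3, L3' | L3', L2' | L2', L1' | L1', L1
  | L3, L4 | L3', L4' => true
  | _, _ => false
  end.
Definition edge (l m : label) : bool := edge0 l m || edge0 m l.

(* Main.v *)
Require Import Defs.
From HB Require Import structures.
From mathcomp Require Import all_boot all_order all_algebra.
From mathcomp Require Import all_classical all_reals all_analysis.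
From mathcomp Require Import ring lra.
Import Order.TTheory GRing.Theory Num.Theory.
Local Open Scope ring_scope.
Import numFieldNormedType.Exports.
Local Open Scope classical_set_scope.

Section S. Variable R : realType.
Notation pt := (R*R*R)%type.
Lemma near3P (p : pt) (P : set pt) : (\forall q \near p, P q) <->
  exists2 e : R, 0 < e & forall q : pt, `|p.1.1 - q.1.1| < e -> `|p.1.2 - q.1.2| < e -> `|p.2 - q.2| < e -> P q.
Proof.
split=> [/nbhs_ballP [e e0 H]|[e e0 H]].
  by exists e => // q h1 h2 h3; apply: H.
by apply/nbhs_ballP; exists e => // q [[h1 h2] h3]; apply: H.
Qed.
Lemma cont_lin (a : pt) : continuous (lin a).
Proof.
move=> x; apply/cvg_ballP => e e0.
set M := 1 + `|a.1.1| + `|a.1.2| + `|a.2|.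
have M0 : 0 < M by rewrite /M; have := normr_ge0 a.1.1; have := normr_ge0 a.1.2; have := normr_ge0 a.2; lra.
apply/near3P; exists (e / M); first exact: divr_gt0.
move=> q h1 h2 h3.
rewrite /ball /= /lin.
have E : a.1.1 * x.1.1 + a.1.2 * x.1.2 + a.2 * x.2 - (a.1.1 * q.1.1 + a.1.2 * q.1.2 + a.2 * q.2)
  = a.1.1 * (x.1.1 - q.1.1) + a.1.2 * (x.1.2 - q.1.2) + a.2 * (x.2 - q.2) by ring.
rewrite E.
set d := e / M.
have T : `|a.1.1 * (x.1.1 - q.1.1) + a.1.2 * (x.1.2 - q.1.2) + a.2 * (x.2 - q.2)| <=
   `|a.1.1| * `|x.1.1 - q.1.1| + `|a.1.2| * `|x.1.2 - q.1.2| + `|a.2| * `|x.2 - q.2|.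
  rewrite -!normrM; apply: (le_trans (ler_normD _ _)); rewrite lerD2r; exact: ler_normD.
have T1 : `|a.1.1| * `|x.1.1 - q.1.1| <= `|a.1.1| * d by apply: ler_wpM2l => //; exact: ltW.
have T2 : `|a.1.2| * `|x.1.2 - q.1.2| <= `|a.1.2| * d by apply: ler_wpM2l => //; exact: ltW.
have T3 : `|a.2| * `|x.2 - q.2| <= `|a.2| * d by apply: ler_wpM2l => //; exact: ltW.
have Md : M * d = e by rewrite /d mulrC divfK // gt_eqF.
have d0 : 0 < d by exact: divr_gt0.
rewrite /M in Md; lra.
Qed.

Lemma sign_const (S : set pt) a x y : connected S -> S x -> S y ->
  (forall z, S z -> lin a z != 0) -> 0 < lin a x -> 0 < lin a y.
Proof.
move=> cS Sx Sy nz ax.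
have C := connected_continuous_connected cS (continuous_subspaceT (@cont_lin a)).
move/connected_intervalP: C => I.
rewrite ltNge; apply/negP => ay.
have ay' : lin a y < 0 by rewrite lt_neqAle ay andbT; exact: nz.
have [z Sz z0] : [set lin a x | x in S] 0.
  apply: (I (lin a y) (lin a x)); [by exists y|by exists x|].
  by rewrite (ltW ay') (ltW ax).
by have := nz z Sz; rewrite z0 eqxx.
Qed.

Lemma seg_cont (x v : pt) : continuous (fun t : R => x + t *: v).
Proof.
move=> t.
apply: (@continuousD R (R*R*R)%type R (fun=> x) (fun t => t *: v) t); first exact: cvg_cst.
by apply: (@continuousZr_tmp R (R*R*R)%type R id); exact: cvg_id.
Qed.

Lemma seg_connected (K : set pt) x : K x ->
  (forall z, K z -> forall t, 0 <= t -> t <= 1 -> K (x + t *: (z - x))) -> connected K.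
Proof.
move=> Kx H.
have -> : K = \bigcup_(z in K) [set x + t *: (z - x) | t in [set t : R | 0 <= t /\ t <= 1]].
  apply/seteqP; split.
    move=> z Kz; exists z => //; exists 1; first by split; lra.
    by rewrite scale1r addrC subrK.
  by move=> w [z Kz [t [t0 t1] <-]]; exact: H.
apply: bigcup_connected.
  exists x => z Kz; exists 0; first by split; lra.
  by rewrite scale0r addr0.
move=> z Kz; apply: connected_continuous_connected; last first.
  exact: continuous_subspaceT (@seg_cont x (z - x)).
apply/connected_intervalP => u w [u0 u1] [w0 w1] r /andP [ur rw]; split; lra.
Qed.

Lemma seg_closure (K : set pt) q z :
  (forall t, 0 < t -> t <= 1 -> K (q + t *: (z - q))) -> closure K q.
Proof.
move=> H B nB.
have := @seg_cont q (z - q) 0.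
move=> /(_ B); rewrite /= scale0r addr0 => /(_ nB) /nbhs_ballP [e e0 He].
set t := Num.min (e / 2) 1.
have t0 : 0 < t by rewrite /t lt_min ltr01 andbT divr_gt0.
have t1 : t <= 1 by rewrite /t ge_min lexx orbT.
have te : t < e.
  have : t <= e / 2 by rewrite /t ge_min lexx.
  lra.
exists (q + t *: (z - q)); split; first exact: H.
apply: He; rewrite /ball /= sub0r normrN gtr0_norm //.
Qed.

Lemma cl_lin (K : set pt) a q : closure K q ->
  (forall x, K x -> 0 < lin a x) -> 0 <= lin a q.
Proof.
move=> cK H; rewrite leNgt; apply/negP => neg.
have nB : nbhs q [set x | lin a x < 0].
  have nB' : nbhs (lin a q) [set y : R | y < 0].
    apply/nbhs_ballP; exists (- lin a q); first by rewrite /=; lra.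
    move=> y; rewrite /ball /= => h.
    rewrite distrC in h; have := ler_norm (y - lin a q); lra.
  exact: (@cont_lin a q _ nB').
have [x [Kx Bx]] := cK _ nB.
have := H x Kx; rewrite /= in Bx; lra.
Qed.

Lemma lin_seg (a p v : pt) (t : R) : lin a (p + t *: v) = lin a p + t * lin a v.
Proof.
rewrite /lin.
have -> : (p + t *: v).1.1 = p.1.1 + t * v.1.1 by [].
have -> : (p + t *: v).1.2 = p.1.2 + t * v.1.2 by [].
have -> : (p + t *: v).2 = p.2 + t * v.2 by [].
ring.
Qed.

Lemma no_wall (S : set pt) (f g : pt) :
  (forall q, S q -> lin f q = 0 /\ lin g q = 0) ->
  (forall a : pt, lin f (0, a.2, - a.1.2) = 0 -> lin g (0, a.2, - a.1.2) = 0 ->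
     lin f (- a.2, 0, a.1.1) = 0 -> lin g (- a.2, 0, a.1.1) = 0 ->
     lin f (a.1.2, - a.1.1, 0) = 0 -> lin g (a.1.2, - a.1.1, 0) = 0 -> a = (0, 0, 0)) ->
  forall (a : pt) c p, a <> (0, 0, 0) -> lin a p = c -> ~ (\forall q \near p, lin a q = c -> S q).
Proof.
move=> HS Hlin a c p a0 ap /near3P [e e0 H].
set M := 1 + `|a.1.1| + `|a.1.2| + `|a.2|.
have M0 : 0 < M by rewrite /M; have := normr_ge0 a.1.1; have := normr_ge0 a.1.2; have := normr_ge0 a.2; lra.
have Sp : S p by apply: H => //; rewrite subrr normr0.
have key : forall v : pt, lin a v = 0 -> `|v.1.1| <= M -> `|v.1.2| <= M -> `|v.2| <= M ->
    lin f v = 0 /\ lin g v = 0.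
  move=> v av v1 v2 v3.
  set t := e / (2 * M).
  have t0 : 0 < t by rewrite /t divr_gt0 // mulr_gt0.
  have tM : t * M < e.
    have -> : t * M = e / 2 by rewrite /t; field; rewrite gt_eqF.
    lra.
  have bnd : forall w, `|w| <= M -> forall pw : R, `|pw - (pw + t * w)| < e.
    move=> w wM pw; rewrite opprD addrA subrr sub0r normrN normrM gtr0_norm //.
    by apply: (le_lt_trans _ tM); rewrite ler_pM2l.
  have Sq : S (p + t *: v).
    apply: H; [exact: bnd|exact: bnd|exact: bnd|].
    by rewrite lin_seg av mulr0 addr0.
  have [fq gq] := HS _ Sq; have [fp gp] := HS _ Sp.
  rewrite !lin_seg in fq gq; rewrite fp in fq; rewrite gp in gq.
  move: fq gq; rewrite !add0r => /eqP; rewrite mulf_eq0 gt_eqF //= => /eqP ->.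
  by move=> /eqP; rewrite mulf_eq0 gt_eqF //= => /eqP ->.
have n1 : `|a.1.1| <= M by rewrite /M; have := normr_ge0 a.1.2; have := normr_ge0 a.2; lra.
have n2 : `|a.1.2| <= M by rewrite /M; have := normr_ge0 a.1.1; have := normr_ge0 a.2; lra.
have n3 : `|a.2| <= M by rewrite /M; have := normr_ge0 a.1.2; have := normr_ge0 a.1.1; lra.
have z : `|0 : R| <= M by rewrite normr0; lra.
have l1 : lin a (0, a.2, - a.1.2) = 0 by rewrite /lin /=; ring.
have l2 : lin a (- a.2, 0, a.1.1) = 0 by rewrite /lin /=; ring.
have l3 : lin a (a.1.2, - a.1.1, 0) = 0 by rewrite /lin /=; ring.
have m1 : `|- a.1.1| <= M by rewrite normrN.
have m2 : `|- a.1.2| <= M by rewrite normrN.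
have m3 : `|- a.2| <= M by rewrite normrN.
have [f1 g1] := key _ l1 z n3 m2.
have [f2 g2] := key _ l2 m3 z n1.
have [f3 g3] := key _ l3 n2 m1 z.
exact: a0 (Hlin a f1 g1 f2 g2 f3 g3).
Qed.

Definition consv (l : label) : seq pt :=
  match l with
  | L1  => [:: (0, -1, 1); (0, 2, -1); (0, -1, 1); (1, 0, -1)]
  | L2  => [:: (0, -1, 1); (0, 2, -1); (1, -1, 0); (-1, 0, 1)]
  | L3  => [:: (0, -1, 1); (1, 1, -1); (-1, 1, 0); (0, -1, 1)]
  | L4  => [:: (1, 0, 0); (-1, -1, 1); (0, 2, -1); (0, -1, 1)]
  | L1' => [:: (0, 1, -1); (0, -1, 2); (0, 1, -1); (1, -1, 0)]
  | L2' => [:: (0, 1, -1); (0, -1, 2); (1, 0, -1); (-1, 1, 0)]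
  | L3' => [:: (0, 1, -1); (1, -1, 1); (-1, 0, 1); (0, 1, -1)]
  | L4' => [:: (1, 0, 0); (-1, 1, -1); (0, -1, 2); (0, 1, -1)]
  end.

Definition wit (l : label) : pt :=
  match l with
  | L1 => (9, 6, 8) | L2 => (7, 6, 8) | L3 => (4, 6, 8) | L4 => (1, 6, 8)
  | L1' => (9, 8, 6) | L2' => (7, 8, 6) | L3' => (4, 8, 6) | L4' => (1, 8, 6)
  end.

Definition allpos (s : seq pt) (x : pt) := all (fun a => 0 < lin a x) s.
Definition allnn (s : seq pt) (x : pt) := all (fun a => 0 <= lin a x) s.

Lemma chamber_eq l : @chamber_of R l = [set x | allpos (consv l) x].
Proof.
apply/seteqP; split => x; case: l; rewrite /allpos /= /lin /psi1 /phi1 /phi2 /= ?andbT.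
all: first [ case=> h1 [h2 [h3 h4]]; apply/and4P; split; lra
           | move=> /and4P [h1 h2 h3 h4]; repeat split; lra ].
Qed.

Lemma wit_in l : @chamber_of R l (wit l).
Proof. case: l; rewrite /= /psi1 /phi1 /phi2 /=; repeat split; lra. Qed.

Lemma allpos_conv s x z t : allpos s x -> allpos s z -> 0 <= t -> t <= 1 ->
  allpos s (x + t *: (z - x)).
Proof.
move=> /allP hx /allP hz t0 t1; apply/allP => a ain.
have := hx a ain; have := hz a ain.
rewrite lin_seg.
have -> : lin a (z - x) = lin a z - lin a x.
  rewrite /lin.
  have -> : (z - x).1.1 = z.1.1 - x.1.1 by [].
  have -> : (z - x).1.2 = z.1.2 - x.1.2 by [].
  have -> : (z - x).2 = z.2 - x.2 by [].
  ring.
move=> pz px.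
have : 0 <= t * lin a z by apply: mulr_ge0 => //; exact: ltW.
have : 0 <= (1 - t) * lin a x by apply: mulr_ge0; [lra|exact: ltW].
case: (ltrP 0 t) => tp.
  have : 0 < t * lin a z by exact: mulr_gt0.
  nra.
have -> : t = 0 by lra.
nra.
Qed.

Lemma chamber_connected l : connected (@chamber_of R l).
Proof.
apply: (@seg_connected _ (wit l)); first exact: wit_in.
move=> z; rewrite chamber_eq => hz t t0 t1.
have := wit_in l; rewrite chamber_eq => hw.
exact: allpos_conv.
Qed.

Lemma cl_chamber l : closure (@chamber_of R l) = [set q | allnn (consv l) q].
Proof.
apply/seteqP; split => q.
  move=> cq; apply/allP => a ain; apply: (@cl_lin _ a q cq) => x.
  by rewrite chamber_eq => /allP /(_ a ain).
move=> /allP hq; apply: (@seg_closure _ q (wit l)) => t t0 t1.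
rewrite chamber_eq; apply/allP => a ain.
have := wit_in l; rewrite chamber_eq => /allP /(_ a ain) pz.
have px := hq a ain.
rewrite lin_seg.
have -> : lin a (wit l - q) = lin a (wit l) - lin a q.
  rewrite /lin.
  have -> : (wit l - q).1.1 = (wit l).1.1 - q.1.1 by [].
  have -> : (wit l - q).1.2 = (wit l).1.2 - q.1.2 by [].
  have -> : (wit l - q).2 = (wit l).2 - q.2 by [].
  ring.
have : 0 < t * lin a (wit l) by exact: mulr_gt0.
have : 0 <= (1 - t) * lin a q by apply: mulr_ge0; lra.
nra.
Qed.

Ltac unf := rewrite /pairing /lin /psi1 /phi1 /phi2 /=.

Lemma memw (w : weight) : w \in weights_R -> w \in weights_R. Proof. by []. Qed.

Lemma sub_compl l x : @chamber_of R l x -> complement x.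
Proof.
move=> hx; split.
  case: l hx; rewrite /= /Weyl /psi1 /phi1 /phi2 /= => -[h1 [h2 [h3 h4]]]; repeat split; lra.
move=> w; rewrite /weights_R !inE.
case: l hx => /= -[h1 [h2 [h3 h4]]]; rewrite /psi1 /phi1 /phi2 in h1 h2 h3 h4.
all: repeat (case/orP => [/eqP -> | ]); try move=> /eqP ->.
all: unf; first [apply: lt0r_neq0; lra | apply: ltr0_neq0; lra].
Qed.

Lemma cover_ch x : complement x -> exists l, @chamber_of R l x.
Proof.
move=> [[w1 [w2 w3]] H].
have n1 : pairing (0,-1,1)%Z x != 0 by apply: H.
have n2 : pairing (-1,-1,1)%Z x != 0 by apply: H.
have n3 : pairing (-1,1,0)%Z x != 0 by apply: H.
have n4 : pairing (1,0,-1)%Z x != 0 by apply: H.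
have n5 : pairing (1,-1,1)%Z x != 0 by apply: H.
move: n1 n2 n3 n4 n5 w1 w2 w3; unf; rewrite !neq_lt.
move=> /orP [n1|n1] /orP [n2|n2] /orP [n3|n3] /orP [n4|n4] /orP [n5|n5] w1 w2 w3.
- exfalso; lra.
- exfalso; lra.
- exfalso; lra.
- by exists L1'; unf; repeat split; lra.
- by exists L4'; unf; repeat split; lra.
- by exists L3'; unf; repeat split; lra.
- exfalso; lra.
- by exists L2'; unf; repeat split; lra.
- exfalso; lra.
- exfalso; lra.
- exfalso; lra.
- exfalso; lra.
- exfalso; lra.
- exfalso; lra.
- exfalso; lra.
- exfalso; lra.
- exfalso; lra.
- by exists L2; unf; repeat split; lra.
- exfalso; lra.
- by exists L1; unf; repeat split; lra.
- exfalso; lra.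
- by exists L3; unf; repeat split; lra.
- exfalso; lra.
- exfalso; lra.
- exfalso; lra.
- exfalso; lra.
- exfalso; lra.
- exfalso; lra.
- exfalso; lra.
- by exists L4; unf; repeat split; lra.
- exfalso; lra.
- exfalso; lra.
Qed.


Ltac nz_tac H w z :=
  have: pairing w z != 0; [by apply: H | ];
  unf; rewrite !neq_lt => /orP [h|h]; apply/orP; first [left; lra | right; lra].

Lemma cons_ok l a : a \in consv l ->
  (forall z, Weyl z -> 0 < lin a z) \/ (forall z, @complement R z -> lin a z != 0).
Proof.
case: l; rewrite /consv !inE => /or4P [] /eqP ->.
all: first [ left; move=> z; rewrite /Weyl /lin /psi1 /phi1 /phi2 /= => -[h1 [h2 h3]]; lra
           | right; move=> z [_ H]; first [ nz_tac H (0,-1,1)%Z z | nz_tac H (-1,-1,1)%Z z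
               | nz_tac H (-1,1,0)%Z z | nz_tac H (1,0,-1)%Z z | nz_tac H (1,-1,1)%Z z ] ].
Qed.

Lemma comp_eq l x : @chamber_of R l x -> connected_component (@complement R) x = @chamber_of R l.
Proof.
move=> hx; apply/seteqP; split; last first.
  apply: connected_component_max => //; last exact: chamber_connected.
  by move=> y; apply: sub_compl.
move=> y Cy.
have cC := @component_connected _ (@complement R) x.
have sub := @connected_component_sub _ (@complement R) x.
have Cx : connected_component (@complement R) x x by apply: connected_component_refl; exact: sub_compl hx.
rewrite chamber_eq /=; apply/allP => a ain.
have := hx; rewrite chamber_eq => /allP /(_ a ain) ax.
case: (@cons_ok l a ain) => [W|N]; first exact: W y (sub y Cy).1.
apply: (@sign_const _ a x y cC Cx Cy) => // z Cz; exact: N z (sub z Cz).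
Qed.

End S.

Ltac unf := rewrite /pairing /lin /psi1 /phi1 /phi2 /=.

Section T. Variable R : realType.
Lemma part1 : [set K | is_chamber K] = range (@chamber_of R).
Proof.
apply/seteqP; split.
  move=> K [x cx ->]; have [l hl] := @cover_ch R x cx.
  by exists l => //; rewrite (@comp_eq R l x hl).
move=> K [l _ <-]; exists (wit R l); first exact: (@sub_compl R l _ (wit_in R l)).
by rewrite (@comp_eq R l _ (wit_in R l)).
Qed.
Lemma part2 : injective (@chamber_of R).
Proof.
move=> l m E; have := wit_in R l; rewrite E; clear E.
case: l; case: m; rewrite /= /psi1 /phi1 /phi2 /= => -[h1 [h2 [h3 h4]]] //; exfalso; lra.
Qed.
Lemma part3 : (forall (l : label) (x : R * R * R) (i : 'I_5), @chamber_of R l x ->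
     if nth false (sign_vector l) i
     then 0 < pairing (nth (0, 0, 0)%Z sign_forms i) x
     else pairing (nth (0, 0, 0)%Z sign_forms i) x < 0).
Proof.
move=> l x i; case: l => /= -[h1 [h2 [h3 h4]]]; rewrite /psi1 /phi1 /phi2 in h1 h2 h3 h4.
all: case: i => [[|[|[|[|[|i]]]]] Hi] //=; unf; lra.
Qed.

Lemma adj_0_0 : chambers_adjacent (@chamber_of R L1) (@chamber_of R L1) <-> edge L1 L1.
Proof.
by split => // -[].
Qed.

Lemma adj_0_1 : chambers_adjacent (@chamber_of R L1) (@chamber_of R L2) <-> edge L1 L2.
Proof.
split => // _; split.
    by move=> E; have := wit_in R L1; rewrite E; clear E; rewrite /= /psi1 /phi1 /phi2 /= => -[h1 [h2 [h3 h4]]]; lra.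
  exists ((1,0,-1) : R*R*R), 0, ((8,6,8) : R*R*R); split; first by case; lra.
  split; first by unf; lra.
  apply/near3P; exists (1/2); first lra.
  move=> q h1 h2 h3 hl; rewrite !cl_chamber; move: h1 h2 h3 hl; rewrite /= !ltr_norml.
  move=> /andP [h1 h1'] /andP [h2 h2'] /andP [h3 h3']; unf => hl.
  split; rewrite /allnn /=; unf; rewrite ?andbT; apply/and4P; split; lra.
Qed.

Lemma adj_0_2 : chambers_adjacent (@chamber_of R L1) (@chamber_of R L3) <-> edge L1 L3.
Proof.
split => // -[_ [a [c [p [a0 [ap Hn]]]]]].
  exfalso; apply: (@no_wall R _ ((0,-1,1) : R*R*R) ((1,-1,0) : R*R*R) _ _ a c p a0 ap Hn); clear Hn a0 ap.
    move=> q []; rewrite !cl_chamber /allnn /=; unf; rewrite ?andbT => /and4P [h1 h2 h3 h4] /and4P [k1 k2 k3 k4]; split; lra.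
  move=> [[a1 a2] a3]; unf => e1 e2 e3 e4 e5 e6.
  have z1 : a1 = 0 by lra. have z2 : a2 = 0 by lra. have z3 : a3 = 0 by lra.
  by rewrite z1 z2 z3.
Qed.

Lemma adj_0_3 : chambers_adjacent (@chamber_of R L1) (@chamber_of R L4) <-> edge L1 L4.
Proof.
split => // -[_ [a [c [p [a0 [ap Hn]]]]]].
  exfalso; apply: (@no_wall R _ ((0,-1,1) : R*R*R) ((1,-1,0) : R*R*R) _ _ a c p a0 ap Hn); clear Hn a0 ap.
    move=> q []; rewrite !cl_chamber /allnn /=; unf; rewrite ?andbT => /and4P [h1 h2 h3 h4] /and4P [k1 k2 k3 k4]; split; lra.
  move=> [[a1 a2] a3]; unf => e1 e2 e3 e4 e5 e6.
  have z1 : a1 = 0 by lra. have z2 : a2 = 0 by lra. have z3 : a3 = 0 by lra.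
  by rewrite z1 z2 z3.
Qed.

Lemma adj_0_4 : chambers_adjacent (@chamber_of R L1) (@chamber_of R L1') <-> edge L1 L1'.
Proof.
split => // _; split.
    by move=> E; have := wit_in R L1; rewrite E; clear E; rewrite /= /psi1 /phi1 /phi2 /= => -[h1 [h2 [h3 h4]]]; lra.
  exists ((0,-1,1) : R*R*R), 0, ((9,6,6) : R*R*R); split; first by case; lra.
  split; first by unf; lra.
  apply/near3P; exists (1/2); first lra.
  move=> q h1 h2 h3 hl; rewrite !cl_chamber; move: h1 h2 h3 hl; rewrite /= !ltr_norml.
  move=> /andP [h1 h1'] /andP [h2 h2'] /andP [h3 h3']; unf => hl.
  split; rewrite /allnn /=; unf; rewrite ?andbT; apply/and4P; split; lra.
Qed.

Lemma adj_0_5 : chambers_adjacent (@chamber_of R L1) (@chamber_of R L2') <-> edge L1 L2'.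
Proof.
split => // -[_ [a [c [p [a0 [ap Hn]]]]]].
  exfalso; apply: (@no_wall R _ ((0,-1,1) : R*R*R) ((1,-1,0) : R*R*R) _ _ a c p a0 ap Hn); clear Hn a0 ap.
    move=> q []; rewrite !cl_chamber /allnn /=; unf; rewrite ?andbT => /and4P [h1 h2 h3 h4] /and4P [k1 k2 k3 k4]; split; lra.
  move=> [[a1 a2] a3]; unf => e1 e2 e3 e4 e5 e6.
  have z1 : a1 = 0 by lra. have z2 : a2 = 0 by lra. have z3 : a3 = 0 by lra.
  by rewrite z1 z2 z3.
Qed.

Lemma adj_0_6 : chambers_adjacent (@chamber_of R L1) (@chamber_of R L3') <-> edge L1 L3'.
Proof.
split => // -[_ [a [c [p [a0 [ap Hn]]]]]].
  exfalso; apply: (@no_wall R _ ((0,-1,1) : R*R*R) ((1,-1,0) : R*R*R) _ _ a c p a0 ap Hn); clear Hn a0 ap.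
    move=> q []; rewrite !cl_chamber /allnn /=; unf; rewrite ?andbT => /and4P [h1 h2 h3 h4] /and4P [k1 k2 k3 k4]; split; lra.
  move=> [[a1 a2] a3]; unf => e1 e2 e3 e4 e5 e6.
  have z1 : a1 = 0 by lra. have z2 : a2 = 0 by lra. have z3 : a3 = 0 by lra.
  by rewrite z1 z2 z3.
Qed.

Lemma adj_0_7 : chambers_adjacent (@chamber_of R L1) (@chamber_of R L4') <-> edge L1 L4'.
Proof.
split => // -[_ [a [c [p [a0 [ap Hn]]]]]].
  exfalso; apply: (@no_wall R _ ((0,-1,1) : R*R*R) ((1,0,0) : R*R*R) _ _ a c p a0 ap Hn); clear Hn a0 ap.
    move=> q []; rewrite !cl_chamber /allnn /=; unf; rewrite ?andbT => /and4P [h1 h2 h3 h4] /and4P [k1 k2 k3 k4]; split; lra.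
  move=> [[a1 a2] a3]; unf => e1 e2 e3 e4 e5 e6.
  have z1 : a1 = 0 by lra. have z2 : a2 = 0 by lra. have z3 : a3 = 0 by lra.
  by rewrite z1 z2 z3.
Qed.

Lemma adj_1_0 : chambers_adjacent (@chamber_of R L2) (@chamber_of R L1) <-> edge L2 L1.
Proof.
split => // _; split.
    by move=> E; have := wit_in R L2; rewrite E; clear E; rewrite /= /psi1 /phi1 /phi2 /= => -[h1 [h2 [h3 h4]]]; lra.
  exists ((1,0,-1) : R*R*R), 0, ((8,6,8) : R*R*R); split; first by case; lra.
  split; first by unf; lra.
  apply/near3P; exists (1/2); first lra.
  move=> q h1 h2 h3 hl; rewrite !cl_chamber; move: h1 h2 h3 hl; rewrite /= !ltr_norml.
  move=> /andP [h1 h1'] /andP [h2 h2'] /andP [h3 h3']; unf => hl.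
  split; rewrite /allnn /=; unf; rewrite ?andbT; apply/and4P; split; lra.
Qed.

Lemma adj_1_1 : chambers_adjacent (@chamber_of R L2) (@chamber_of R L2) <-> edge L2 L2.
Proof.
by split => // -[].
Qed.

Lemma adj_1_2 : chambers_adjacent (@chamber_of R L2) (@chamber_of R L3) <-> edge L2 L3.
Proof.
split => // _; split.
    by move=> E; have := wit_in R L2; rewrite E; clear E; rewrite /= /psi1 /phi1 /phi2 /= => -[h1 [h2 [h3 h4]]]; lra.
  exists ((1,-1,0) : R*R*R), 0, ((6,6,8) : R*R*R); split; first by case; lra.
  split; first by unf; lra.
  apply/near3P; exists (1/2); first lra.
  move=> q h1 h2 h3 hl; rewrite !cl_chamber; move: h1 h2 h3 hl; rewrite /= !ltr_norml.
  move=> /andP [h1 h1'] /andP [h2 h2'] /andP [h3 h3']; unf => hl.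
  split; rewrite /allnn /=; unf; rewrite ?andbT; apply/and4P; split; lra.
Qed.

Lemma adj_1_3 : chambers_adjacent (@chamber_of R L2) (@chamber_of R L4) <-> edge L2 L4.
Proof.
split => // -[_ [a [c [p [a0 [ap Hn]]]]]].
  exfalso; apply: (@no_wall R _ ((1,-1,0) : R*R*R) ((1,1,-1) : R*R*R) _ _ a c p a0 ap Hn); clear Hn a0 ap.
    move=> q []; rewrite !cl_chamber /allnn /=; unf; rewrite ?andbT => /and4P [h1 h2 h3 h4] /and4P [k1 k2 k3 k4]; split; lra.
  move=> [[a1 a2] a3]; unf => e1 e2 e3 e4 e5 e6.
  have z1 : a1 = 0 by lra. have z2 : a2 = 0 by lra. have z3 : a3 = 0 by lra.
  by rewrite z1 z2 z3.
Qed.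

Lemma adj_1_4 : chambers_adjacent (@chamber_of R L2) (@chamber_of R L1') <-> edge L2 L1'.
Proof.
split => // -[_ [a [c [p [a0 [ap Hn]]]]]].
  exfalso; apply: (@no_wall R _ ((0,-1,1) : R*R*R) ((1,-1,0) : R*R*R) _ _ a c p a0 ap Hn); clear Hn a0 ap.
    move=> q []; rewrite !cl_chamber /allnn /=; unf; rewrite ?andbT => /and4P [h1 h2 h3 h4] /and4P [k1 k2 k3 k4]; split; lra.
  move=> [[a1 a2] a3]; unf => e1 e2 e3 e4 e5 e6.
  have z1 : a1 = 0 by lra. have z2 : a2 = 0 by lra. have z3 : a3 = 0 by lra.
  by rewrite z1 z2 z3.
Qed.

Lemma adj_1_5 : chambers_adjacent (@chamber_of R L2) (@chamber_of R L2') <-> edge L2 L2'.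
Proof.
split => // -[_ [a [c [p [a0 [ap Hn]]]]]].
  exfalso; apply: (@no_wall R _ ((0,-1,1) : R*R*R) ((1,-1,0) : R*R*R) _ _ a c p a0 ap Hn); clear Hn a0 ap.
    move=> q []; rewrite !cl_chamber /allnn /=; unf; rewrite ?andbT => /and4P [h1 h2 h3 h4] /and4P [k1 k2 k3 k4]; split; lra.
  move=> [[a1 a2] a3]; unf => e1 e2 e3 e4 e5 e6.
  have z1 : a1 = 0 by lra. have z2 : a2 = 0 by lra. have z3 : a3 = 0 by lra.
  by rewrite z1 z2 z3.
Qed.

Lemma adj_1_6 : chambers_adjacent (@chamber_of R L2) (@chamber_of R L3') <-> edge L2 L3'.
Proof.
split => // -[_ [a [c [p [a0 [ap Hn]]]]]].
  exfalso; apply: (@no_wall R _ ((0,-1,1) : R*R*R) ((1,-1,0) : R*R*R) _ _ a c p a0 ap Hn); clear Hn a0 ap.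
    move=> q []; rewrite !cl_chamber /allnn /=; unf; rewrite ?andbT => /and4P [h1 h2 h3 h4] /and4P [k1 k2 k3 k4]; split; lra.
  move=> [[a1 a2] a3]; unf => e1 e2 e3 e4 e5 e6.
  have z1 : a1 = 0 by lra. have z2 : a2 = 0 by lra. have z3 : a3 = 0 by lra.
  by rewrite z1 z2 z3.
Qed.

Lemma adj_1_7 : chambers_adjacent (@chamber_of R L2) (@chamber_of R L4') <-> edge L2 L4'.
Proof.
split => // -[_ [a [c [p [a0 [ap Hn]]]]]].
  exfalso; apply: (@no_wall R _ ((0,-1,1) : R*R*R) ((1,0,0) : R*R*R) _ _ a c p a0 ap Hn); clear Hn a0 ap.
    move=> q []; rewrite !cl_chamber /allnn /=; unf; rewrite ?andbT => /and4P [h1 h2 h3 h4] /and4P [k1 k2 k3 k4]; split; lra.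
  move=> [[a1 a2] a3]; unf => e1 e2 e3 e4 e5 e6.
  have z1 : a1 = 0 by lra. have z2 : a2 = 0 by lra. have z3 : a3 = 0 by lra.
  by rewrite z1 z2 z3.
Qed.

Lemma adj_2_0 : chambers_adjacent (@chamber_of R L3) (@chamber_of R L1) <-> edge L3 L1.
Proof.
split => // -[_ [a [c [p [a0 [ap Hn]]]]]].
  exfalso; apply: (@no_wall R _ ((0,-1,1) : R*R*R) ((1,-1,0) : R*R*R) _ _ a c p a0 ap Hn); clear Hn a0 ap.
    move=> q []; rewrite !cl_chamber /allnn /=; unf; rewrite ?andbT => /and4P [h1 h2 h3 h4] /and4P [k1 k2 k3 k4]; split; lra.
  move=> [[a1 a2] a3]; unf => e1 e2 e3 e4 e5 e6.
  have z1 : a1 = 0 by lra. have z2 : a2 = 0 by lra. have z3 : a3 = 0 by lra.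
  by rewrite z1 z2 z3.
Qed.

Lemma adj_2_1 : chambers_adjacent (@chamber_of R L3) (@chamber_of R L2) <-> edge L3 L2.
Proof.
split => // _; split.
    by move=> E; have := wit_in R L3; rewrite E; clear E; rewrite /= /psi1 /phi1 /phi2 /= => -[h1 [h2 [h3 h4]]]; lra.
  exists ((1,-1,0) : R*R*R), 0, ((6,6,8) : R*R*R); split; first by case; lra.
  split; first by unf; lra.
  apply/near3P; exists (1/2); first lra.
  move=> q h1 h2 h3 hl; rewrite !cl_chamber; move: h1 h2 h3 hl; rewrite /= !ltr_norml.
  move=> /andP [h1 h1'] /andP [h2 h2'] /andP [h3 h3']; unf => hl.
  split; rewrite /allnn /=; unf; rewrite ?andbT; apply/and4P; split; lra.
Qed.

Lemma adj_2_2 : chambers_adjacent (@chamber_of R L3) (@chamber_of R L3) <-> edge L3 L3.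
Proof.
by split => // -[].
Qed.

Lemma adj_2_3 : chambers_adjacent (@chamber_of R L3) (@chamber_of R L4) <-> edge L3 L4.
Proof.
split => // _; split.
    by move=> E; have := wit_in R L3; rewrite E; clear E; rewrite /= /psi1 /phi1 /phi2 /= => -[h1 [h2 [h3 h4]]]; lra.
  exists ((1,1,-1) : R*R*R), 0, ((2,6,8) : R*R*R); split; first by case; lra.
  split; first by unf; lra.
  apply/near3P; exists (1/2); first lra.
  move=> q h1 h2 h3 hl; rewrite !cl_chamber; move: h1 h2 h3 hl; rewrite /= !ltr_norml.
  move=> /andP [h1 h1'] /andP [h2 h2'] /andP [h3 h3']; unf => hl.
  split; rewrite /allnn /=; unf; rewrite ?andbT; apply/and4P; split; lra.
Qed.

Lemma adj_2_4 : chambers_adjacent (@chamber_of R L3) (@chamber_of R L1') <-> edge L3 L1'.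
Proof.
split => // -[_ [a [c [p [a0 [ap Hn]]]]]].
  exfalso; apply: (@no_wall R _ ((0,-1,1) : R*R*R) ((1,-1,0) : R*R*R) _ _ a c p a0 ap Hn); clear Hn a0 ap.
    move=> q []; rewrite !cl_chamber /allnn /=; unf; rewrite ?andbT => /and4P [h1 h2 h3 h4] /and4P [k1 k2 k3 k4]; split; lra.
  move=> [[a1 a2] a3]; unf => e1 e2 e3 e4 e5 e6.
  have z1 : a1 = 0 by lra. have z2 : a2 = 0 by lra. have z3 : a3 = 0 by lra.
  by rewrite z1 z2 z3.
Qed.

Lemma adj_2_5 : chambers_adjacent (@chamber_of R L3) (@chamber_of R L2') <-> edge L3 L2'.
Proof.
split => // -[_ [a [c [p [a0 [ap Hn]]]]]].
  exfalso; apply: (@no_wall R _ ((0,-1,1) : R*R*R) ((1,-1,0) : R*R*R) _ _ a c p a0 ap Hn); clear Hn a0 ap.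
    move=> q []; rewrite !cl_chamber /allnn /=; unf; rewrite ?andbT => /and4P [h1 h2 h3 h4] /and4P [k1 k2 k3 k4]; split; lra.
  move=> [[a1 a2] a3]; unf => e1 e2 e3 e4 e5 e6.
  have z1 : a1 = 0 by lra. have z2 : a2 = 0 by lra. have z3 : a3 = 0 by lra.
  by rewrite z1 z2 z3.
Qed.

Lemma adj_2_6 : chambers_adjacent (@chamber_of R L3) (@chamber_of R L3') <-> edge L3 L3'.
Proof.
split => // _; split.
    by move=> E; have := wit_in R L3; rewrite E; clear E; rewrite /= /psi1 /phi1 /phi2 /= => -[h1 [h2 [h3 h4]]]; lra.
  exists ((0,-1,1) : R*R*R), 0, ((4,6,6) : R*R*R); split; first by case; lra.
  split; first by unf; lra.
  apply/near3P; exists (1/2); first lra.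
  move=> q h1 h2 h3 hl; rewrite !cl_chamber; move: h1 h2 h3 hl; rewrite /= !ltr_norml.
  move=> /andP [h1 h1'] /andP [h2 h2'] /andP [h3 h3']; unf => hl.
  split; rewrite /allnn /=; unf; rewrite ?andbT; apply/and4P; split; lra.
Qed.

Lemma adj_2_7 : chambers_adjacent (@chamber_of R L3) (@chamber_of R L4') <-> edge L3 L4'.
Proof.
split => // -[_ [a [c [p [a0 [ap Hn]]]]]].
  exfalso; apply: (@no_wall R _ ((0,-1,1) : R*R*R) ((1,0,0) : R*R*R) _ _ a c p a0 ap Hn); clear Hn a0 ap.
    move=> q []; rewrite !cl_chamber /allnn /=; unf; rewrite ?andbT => /and4P [h1 h2 h3 h4] /and4P [k1 k2 k3 k4]; split; lra.
  move=> [[a1 a2] a3]; unf => e1 e2 e3 e4 e5 e6.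
  have z1 : a1 = 0 by lra. have z2 : a2 = 0 by lra. have z3 : a3 = 0 by lra.
  by rewrite z1 z2 z3.
Qed.

Lemma adj_3_0 : chambers_adjacent (@chamber_of R L4) (@chamber_of R L1) <-> edge L4 L1.
Proof.
split => // -[_ [a [c [p [a0 [ap Hn]]]]]].
  exfalso; apply: (@no_wall R _ ((0,-1,1) : R*R*R) ((1,-1,0) : R*R*R) _ _ a c p a0 ap Hn); clear Hn a0 ap.
    move=> q []; rewrite !cl_chamber /allnn /=; unf; rewrite ?andbT => /and4P [h1 h2 h3 h4] /and4P [k1 k2 k3 k4]; split; lra.
  move=> [[a1 a2] a3]; unf => e1 e2 e3 e4 e5 e6.
  have z1 : a1 = 0 by lra. have z2 : a2 = 0 by lra. have z3 : a3 = 0 by lra.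
  by rewrite z1 z2 z3.
Qed.

Lemma adj_3_1 : chambers_adjacent (@chamber_of R L4) (@chamber_of R L2) <-> edge L4 L2.
Proof.
split => // -[_ [a [c [p [a0 [ap Hn]]]]]].
  exfalso; apply: (@no_wall R _ ((1,-1,0) : R*R*R) ((1,1,-1) : R*R*R) _ _ a c p a0 ap Hn); clear Hn a0 ap.
    move=> q []; rewrite !cl_chamber /allnn /=; unf; rewrite ?andbT => /and4P [h1 h2 h3 h4] /and4P [k1 k2 k3 k4]; split; lra.
  move=> [[a1 a2] a3]; unf => e1 e2 e3 e4 e5 e6.
  have z1 : a1 = 0 by lra. have z2 : a2 = 0 by lra. have z3 : a3 = 0 by lra.
  by rewrite z1 z2 z3.
Qed.

Lemma adj_3_2 : chambers_adjacent (@chamber_of R L4) (@chamber_of R L3) <-> edge L4 L3.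
Proof.
split => // _; split.
    by move=> E; have := wit_in R L4; rewrite E; clear E; rewrite /= /psi1 /phi1 /phi2 /= => -[h1 [h2 [h3 h4]]]; lra.
  exists ((1,1,-1) : R*R*R), 0, ((2,6,8) : R*R*R); split; first by case; lra.
  split; first by unf; lra.
  apply/near3P; exists (1/2); first lra.
  move=> q h1 h2 h3 hl; rewrite !cl_chamber; move: h1 h2 h3 hl; rewrite /= !ltr_norml.
  move=> /andP [h1 h1'] /andP [h2 h2'] /andP [h3 h3']; unf => hl.
  split; rewrite /allnn /=; unf; rewrite ?andbT; apply/and4P; split; lra.
Qed.

Lemma adj_3_3 : chambers_adjacent (@chamber_of R L4) (@chamber_of R L4) <-> edge L4 L4.
Proof.
by split => // -[].
Qed.

Lemma adj_3_4 : chambers_adjacent (@chamber_of R L4) (@chamber_of R L1') <-> edge L4 L1'.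
Proof.
split => // -[_ [a [c [p [a0 [ap Hn]]]]]].
  exfalso; apply: (@no_wall R _ ((0,-1,1) : R*R*R) ((1,0,0) : R*R*R) _ _ a c p a0 ap Hn); clear Hn a0 ap.
    move=> q []; rewrite !cl_chamber /allnn /=; unf; rewrite ?andbT => /and4P [h1 h2 h3 h4] /and4P [k1 k2 k3 k4]; split; lra.
  move=> [[a1 a2] a3]; unf => e1 e2 e3 e4 e5 e6.
  have z1 : a1 = 0 by lra. have z2 : a2 = 0 by lra. have z3 : a3 = 0 by lra.
  by rewrite z1 z2 z3.
Qed.

Lemma adj_3_5 : chambers_adjacent (@chamber_of R L4) (@chamber_of R L2') <-> edge L4 L2'.
Proof.
split => // -[_ [a [c [p [a0 [ap Hn]]]]]].
  exfalso; apply: (@no_wall R _ ((0,-1,1) : R*R*R) ((1,0,0) : R*R*R) _ _ a c p a0 ap Hn); clear Hn a0 ap.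
    move=> q []; rewrite !cl_chamber /allnn /=; unf; rewrite ?andbT => /and4P [h1 h2 h3 h4] /and4P [k1 k2 k3 k4]; split; lra.
  move=> [[a1 a2] a3]; unf => e1 e2 e3 e4 e5 e6.
  have z1 : a1 = 0 by lra. have z2 : a2 = 0 by lra. have z3 : a3 = 0 by lra.
  by rewrite z1 z2 z3.
Qed.

Lemma adj_3_6 : chambers_adjacent (@chamber_of R L4) (@chamber_of R L3') <-> edge L4 L3'.
Proof.
split => // -[_ [a [c [p [a0 [ap Hn]]]]]].
  exfalso; apply: (@no_wall R _ ((0,-1,1) : R*R*R) ((1,0,0) : R*R*R) _ _ a c p a0 ap Hn); clear Hn a0 ap.
    move=> q []; rewrite !cl_chamber /allnn /=; unf; rewrite ?andbT => /and4P [h1 h2 h3 h4] /and4P [k1 k2 k3 k4]; split; lra.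
  move=> [[a1 a2] a3]; unf => e1 e2 e3 e4 e5 e6.
  have z1 : a1 = 0 by lra. have z2 : a2 = 0 by lra. have z3 : a3 = 0 by lra.
  by rewrite z1 z2 z3.
Qed.

Lemma adj_3_7 : chambers_adjacent (@chamber_of R L4) (@chamber_of R L4') <-> edge L4 L4'.
Proof.
split => // -[_ [a [c [p [a0 [ap Hn]]]]]].
  exfalso; apply: (@no_wall R _ ((0,-1,1) : R*R*R) ((1,0,0) : R*R*R) _ _ a c p a0 ap Hn); clear Hn a0 ap.
    move=> q []; rewrite !cl_chamber /allnn /=; unf; rewrite ?andbT => /and4P [h1 h2 h3 h4] /and4P [k1 k2 k3 k4]; split; lra.
  move=> [[a1 a2] a3]; unf => e1 e2 e3 e4 e5 e6.
  have z1 : a1 = 0 by lra. have z2 : a2 = 0 by lra. have z3 : a3 = 0 by lra.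
  by rewrite z1 z2 z3.
Qed.

Lemma adj_4_0 : chambers_adjacent (@chamber_of R L1') (@chamber_of R L1) <-> edge L1' L1.
Proof.
split => // _; split.
    by move=> E; have := wit_in R L1'; rewrite E; clear E; rewrite /= /psi1 /phi1 /phi2 /= => -[h1 [h2 [h3 h4]]]; lra.
  exists ((0,-1,1) : R*R*R), 0, ((9,6,6) : R*R*R); split; first by case; lra.
  split; first by unf; lra.
  apply/near3P; exists (1/2); first lra.
  move=> q h1 h2 h3 hl; rewrite !cl_chamber; move: h1 h2 h3 hl; rewrite /= !ltr_norml.
  move=> /andP [h1 h1'] /andP [h2 h2'] /andP [h3 h3']; unf => hl.
  split; rewrite /allnn /=; unf; rewrite ?andbT; apply/and4P; split; lra.
Qed.

Lemma adj_4_1 : chambers_adjacent (@chamber_of R L1') (@chamber_of R L2) <-> edge L1' L2.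
Proof.
split => // -[_ [a [c [p [a0 [ap Hn]]]]]].
  exfalso; apply: (@no_wall R _ ((0,-1,1) : R*R*R) ((1,-1,0) : R*R*R) _ _ a c p a0 ap Hn); clear Hn a0 ap.
    move=> q []; rewrite !cl_chamber /allnn /=; unf; rewrite ?andbT => /and4P [h1 h2 h3 h4] /and4P [k1 k2 k3 k4]; split; lra.
  move=> [[a1 a2] a3]; unf => e1 e2 e3 e4 e5 e6.
  have z1 : a1 = 0 by lra. have z2 : a2 = 0 by lra. have z3 : a3 = 0 by lra.
  by rewrite z1 z2 z3.
Qed.

Lemma adj_4_2 : chambers_adjacent (@chamber_of R L1') (@chamber_of R L3) <-> edge L1' L3.
Proof.
split => // -[_ [a [c [p [a0 [ap Hn]]]]]].
  exfalso; apply: (@no_wall R _ ((0,-1,1) : R*R*R) ((1,-1,0) : R*R*R) _ _ a c p a0 ap Hn); clear Hn a0 ap.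
    move=> q []; rewrite !cl_chamber /allnn /=; unf; rewrite ?andbT => /and4P [h1 h2 h3 h4] /and4P [k1 k2 k3 k4]; split; lra.
  move=> [[a1 a2] a3]; unf => e1 e2 e3 e4 e5 e6.
  have z1 : a1 = 0 by lra. have z2 : a2 = 0 by lra. have z3 : a3 = 0 by lra.
  by rewrite z1 z2 z3.
Qed.

Lemma adj_4_3 : chambers_adjacent (@chamber_of R L1') (@chamber_of R L4) <-> edge L1' L4.
Proof.
split => // -[_ [a [c [p [a0 [ap Hn]]]]]].
  exfalso; apply: (@no_wall R _ ((0,-1,1) : R*R*R) ((1,0,0) : R*R*R) _ _ a c p a0 ap Hn); clear Hn a0 ap.
    move=> q []; rewrite !cl_chamber /allnn /=; unf; rewrite ?andbT => /and4P [h1 h2 h3 h4] /and4P [k1 k2 k3 k4]; split; lra.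
  move=> [[a1 a2] a3]; unf => e1 e2 e3 e4 e5 e6.
  have z1 : a1 = 0 by lra. have z2 : a2 = 0 by lra. have z3 : a3 = 0 by lra.
  by rewrite z1 z2 z3.
Qed.

Lemma adj_4_4 : chambers_adjacent (@chamber_of R L1') (@chamber_of R L1') <-> edge L1' L1'.
Proof.
by split => // -[].
Qed.

Lemma adj_4_5 : chambers_adjacent (@chamber_of R L1') (@chamber_of R L2') <-> edge L1' L2'.
Proof.
split => // _; split.
    by move=> E; have := wit_in R L1'; rewrite E; clear E; rewrite /= /psi1 /phi1 /phi2 /= => -[h1 [h2 [h3 h4]]]; lra.
  exists ((1,-1,0) : R*R*R), 0, ((8,8,6) : R*R*R); split; first by case; lra.
  split; first by unf; lra.
  apply/near3P; exists (1/2); first lra.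
  move=> q h1 h2 h3 hl; rewrite !cl_chamber; move: h1 h2 h3 hl; rewrite /= !ltr_norml.
  move=> /andP [h1 h1'] /andP [h2 h2'] /andP [h3 h3']; unf => hl.
  split; rewrite /allnn /=; unf; rewrite ?andbT; apply/and4P; split; lra.
Qed.

Lemma adj_4_6 : chambers_adjacent (@chamber_of R L1') (@chamber_of R L3') <-> edge L1' L3'.
Proof.
split => // -[_ [a [c [p [a0 [ap Hn]]]]]].
  exfalso; apply: (@no_wall R _ ((0,-1,1) : R*R*R) ((1,0,-1) : R*R*R) _ _ a c p a0 ap Hn); clear Hn a0 ap.
    move=> q []; rewrite !cl_chamber /allnn /=; unf; rewrite ?andbT => /and4P [h1 h2 h3 h4] /and4P [k1 k2 k3 k4]; split; lra.
  move=> [[a1 a2] a3]; unf => e1 e2 e3 e4 e5 e6.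
  have z1 : a1 = 0 by lra. have z2 : a2 = 0 by lra. have z3 : a3 = 0 by lra.
  by rewrite z1 z2 z3.
Qed.

Lemma adj_4_7 : chambers_adjacent (@chamber_of R L1') (@chamber_of R L4') <-> edge L1' L4'.
Proof.
split => // -[_ [a [c [p [a0 [ap Hn]]]]]].
  exfalso; apply: (@no_wall R _ ((0,-1,1) : R*R*R) ((1,0,-1) : R*R*R) _ _ a c p a0 ap Hn); clear Hn a0 ap.
    move=> q []; rewrite !cl_chamber /allnn /=; unf; rewrite ?andbT => /and4P [h1 h2 h3 h4] /and4P [k1 k2 k3 k4]; split; lra.
  move=> [[a1 a2] a3]; unf => e1 e2 e3 e4 e5 e6.
  have z1 : a1 = 0 by lra. have z2 : a2 = 0 by lra. have z3 : a3 = 0 by lra.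
  by rewrite z1 z2 z3.
Qed.

Lemma adj_5_0 : chambers_adjacent (@chamber_of R L2') (@chamber_of R L1) <-> edge L2' L1.
Proof.
split => // -[_ [a [c [p [a0 [ap Hn]]]]]].
  exfalso; apply: (@no_wall R _ ((0,-1,1) : R*R*R) ((1,-1,0) : R*R*R) _ _ a c p a0 ap Hn); clear Hn a0 ap.
    move=> q []; rewrite !cl_chamber /allnn /=; unf; rewrite ?andbT => /and4P [h1 h2 h3 h4] /and4P [k1 k2 k3 k4]; split; lra.
  move=> [[a1 a2] a3]; unf => e1 e2 e3 e4 e5 e6.
  have z1 : a1 = 0 by lra. have z2 : a2 = 0 by lra. have z3 : a3 = 0 by lra.
  by rewrite z1 z2 z3.
Qed.

Lemma adj_5_1 : chambers_adjacent (@chamber_of R L2') (@chamber_of R L2) <-> edge L2' L2.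
Proof.
split => // -[_ [a [c [p [a0 [ap Hn]]]]]].
  exfalso; apply: (@no_wall R _ ((0,-1,1) : R*R*R) ((1,-1,0) : R*R*R) _ _ a c p a0 ap Hn); clear Hn a0 ap.
    move=> q []; rewrite !cl_chamber /allnn /=; unf; rewrite ?andbT => /and4P [h1 h2 h3 h4] /and4P [k1 k2 k3 k4]; split; lra.
  move=> [[a1 a2] a3]; unf => e1 e2 e3 e4 e5 e6.
  have z1 : a1 = 0 by lra. have z2 : a2 = 0 by lra. have z3 : a3 = 0 by lra.
  by rewrite z1 z2 z3.
Qed.

Lemma adj_5_2 : chambers_adjacent (@chamber_of R L2') (@chamber_of R L3) <-> edge L2' L3.
Proof.
split => // -[_ [a [c [p [a0 [ap Hn]]]]]].
  exfalso; apply: (@no_wall R _ ((0,-1,1) : R*R*R) ((1,-1,0) : R*R*R) _ _ a c p a0 ap Hn); clear Hn a0 ap.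
    move=> q []; rewrite !cl_chamber /allnn /=; unf; rewrite ?andbT => /and4P [h1 h2 h3 h4] /and4P [k1 k2 k3 k4]; split; lra.
  move=> [[a1 a2] a3]; unf => e1 e2 e3 e4 e5 e6.
  have z1 : a1 = 0 by lra. have z2 : a2 = 0 by lra. have z3 : a3 = 0 by lra.
  by rewrite z1 z2 z3.
Qed.

Lemma adj_5_3 : chambers_adjacent (@chamber_of R L2') (@chamber_of R L4) <-> edge L2' L4.
Proof.
split => // -[_ [a [c [p [a0 [ap Hn]]]]]].
  exfalso; apply: (@no_wall R _ ((0,-1,1) : R*R*R) ((1,0,0) : R*R*R) _ _ a c p a0 ap Hn); clear Hn a0 ap.
    move=> q []; rewrite !cl_chamber /allnn /=; unf; rewrite ?andbT => /and4P [h1 h2 h3 h4] /and4P [k1 k2 k3 k4]; split; lra.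
  move=> [[a1 a2] a3]; unf => e1 e2 e3 e4 e5 e6.
  have z1 : a1 = 0 by lra. have z2 : a2 = 0 by lra. have z3 : a3 = 0 by lra.
  by rewrite z1 z2 z3.
Qed.

Lemma adj_5_4 : chambers_adjacent (@chamber_of R L2') (@chamber_of R L1') <-> edge L2' L1'.
Proof.
split => // _; split.
    by move=> E; have := wit_in R L2'; rewrite E; clear E; rewrite /= /psi1 /phi1 /phi2 /= => -[h1 [h2 [h3 h4]]]; lra.
  exists ((1,-1,0) : R*R*R), 0, ((8,8,6) : R*R*R); split; first by case; lra.
  split; first by unf; lra.
  apply/near3P; exists (1/2); first lra.
  move=> q h1 h2 h3 hl; rewrite !cl_chamber; move: h1 h2 h3 hl; rewrite /= !ltr_norml.
  move=> /andP [h1 h1'] /andP [h2 h2'] /andP [h3 h3']; unf => hl.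
  split; rewrite /allnn /=; unf; rewrite ?andbT; apply/and4P; split; lra.
Qed.

Lemma adj_5_5 : chambers_adjacent (@chamber_of R L2') (@chamber_of R L2') <-> edge L2' L2'.
Proof.
by split => // -[].
Qed.

Lemma adj_5_6 : chambers_adjacent (@chamber_of R L2') (@chamber_of R L3') <-> edge L2' L3'.
Proof.
split => // _; split.
    by move=> E; have := wit_in R L2'; rewrite E; clear E; rewrite /= /psi1 /phi1 /phi2 /= => -[h1 [h2 [h3 h4]]]; lra.
  exists ((1,0,-1) : R*R*R), 0, ((6,8,6) : R*R*R); split; first by case; lra.
  split; first by unf; lra.
  apply/near3P; exists (1/2); first lra.
  move=> q h1 h2 h3 hl; rewrite !cl_chamber; move: h1 h2 h3 hl; rewrite /= !ltr_norml.
  move=> /andP [h1 h1'] /andP [h2 h2'] /andP [h3 h3']; unf => hl.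
  split; rewrite /allnn /=; unf; rewrite ?andbT; apply/and4P; split; lra.
Qed.

Lemma adj_5_7 : chambers_adjacent (@chamber_of R L2') (@chamber_of R L4') <-> edge L2' L4'.
Proof.
split => // -[_ [a [c [p [a0 [ap Hn]]]]]].
  exfalso; apply: (@no_wall R _ ((1,0,-1) : R*R*R) ((1,-1,1) : R*R*R) _ _ a c p a0 ap Hn); clear Hn a0 ap.
    move=> q []; rewrite !cl_chamber /allnn /=; unf; rewrite ?andbT => /and4P [h1 h2 h3 h4] /and4P [k1 k2 k3 k4]; split; lra.
  move=> [[a1 a2] a3]; unf => e1 e2 e3 e4 e5 e6.
  have z1 : a1 = 0 by lra. have z2 : a2 = 0 by lra. have z3 : a3 = 0 by lra.
  by rewrite z1 z2 z3.
Qed.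

Lemma adj_6_0 : chambers_adjacent (@chamber_of R L3') (@chamber_of R L1) <-> edge L3' L1.
Proof.
split => // -[_ [a [c [p [a0 [ap Hn]]]]]].
  exfalso; apply: (@no_wall R _ ((0,-1,1) : R*R*R) ((1,-1,0) : R*R*R) _ _ a c p a0 ap Hn); clear Hn a0 ap.
    move=> q []; rewrite !cl_chamber /allnn /=; unf; rewrite ?andbT => /and4P [h1 h2 h3 h4] /and4P [k1 k2 k3 k4]; split; lra.
  move=> [[a1 a2] a3]; unf => e1 e2 e3 e4 e5 e6.
  have z1 : a1 = 0 by lra. have z2 : a2 = 0 by lra. have z3 : a3 = 0 by lra.
  by rewrite z1 z2 z3.
Qed.

Lemma adj_6_1 : chambers_adjacent (@chamber_of R L3') (@chamber_of R L2) <-> edge L3' L2.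
Proof.
split => // -[_ [a [c [p [a0 [ap Hn]]]]]].
  exfalso; apply: (@no_wall R _ ((0,-1,1) : R*R*R) ((1,-1,0) : R*R*R) _ _ a c p a0 ap Hn); clear Hn a0 ap.
    move=> q []; rewrite !cl_chamber /allnn /=; unf; rewrite ?andbT => /and4P [h1 h2 h3 h4] /and4P [k1 k2 k3 k4]; split; lra.
  move=> [[a1 a2] a3]; unf => e1 e2 e3 e4 e5 e6.
  have z1 : a1 = 0 by lra. have z2 : a2 = 0 by lra. have z3 : a3 = 0 by lra.
  by rewrite z1 z2 z3.
Qed.

Lemma adj_6_2 : chambers_adjacent (@chamber_of R L3') (@chamber_of R L3) <-> edge L3' L3.
Proof.
split => // _; split.
    by move=> E; have := wit_in R L3'; rewrite E; clear E; rewrite /= /psi1 /phi1 /phi2 /= => -[h1 [h2 [h3 h4]]]; lra.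
  exists ((0,-1,1) : R*R*R), 0, ((4,6,6) : R*R*R); split; first by case; lra.
  split; first by unf; lra.
  apply/near3P; exists (1/2); first lra.
  move=> q h1 h2 h3 hl; rewrite !cl_chamber; move: h1 h2 h3 hl; rewrite /= !ltr_norml.
  move=> /andP [h1 h1'] /andP [h2 h2'] /andP [h3 h3']; unf => hl.
  split; rewrite /allnn /=; unf; rewrite ?andbT; apply/and4P; split; lra.
Qed.

Lemma adj_6_3 : chambers_adjacent (@chamber_of R L3') (@chamber_of R L4) <-> edge L3' L4.
Proof.
split => // -[_ [a [c [p [a0 [ap Hn]]]]]].
  exfalso; apply: (@no_wall R _ ((0,-1,1) : R*R*R) ((1,0,0) : R*R*R) _ _ a c p a0 ap Hn); clear Hn a0 ap.
    move=> q []; rewrite !cl_chamber /allnn /=; unf; rewrite ?andbT => /and4P [h1 h2 h3 h4] /and4P [k1 k2 k3 k4]; split; lra.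
  move=> [[a1 a2] a3]; unf => e1 e2 e3 e4 e5 e6.
  have z1 : a1 = 0 by lra. have z2 : a2 = 0 by lra. have z3 : a3 = 0 by lra.
  by rewrite z1 z2 z3.
Qed.

Lemma adj_6_4 : chambers_adjacent (@chamber_of R L3') (@chamber_of R L1') <-> edge L3' L1'.
Proof.
split => // -[_ [a [c [p [a0 [ap Hn]]]]]].
  exfalso; apply: (@no_wall R _ ((0,-1,1) : R*R*R) ((1,0,-1) : R*R*R) _ _ a c p a0 ap Hn); clear Hn a0 ap.
    move=> q []; rewrite !cl_chamber /allnn /=; unf; rewrite ?andbT => /and4P [h1 h2 h3 h4] /and4P [k1 k2 k3 k4]; split; lra.
  move=> [[a1 a2] a3]; unf => e1 e2 e3 e4 e5 e6.
  have z1 : a1 = 0 by lra. have z2 : a2 = 0 by lra. have z3 : a3 = 0 by lra.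
  by rewrite z1 z2 z3.
Qed.

Lemma adj_6_5 : chambers_adjacent (@chamber_of R L3') (@chamber_of R L2') <-> edge L3' L2'.
Proof.
split => // _; split.
    by move=> E; have := wit_in R L3'; rewrite E; clear E; rewrite /= /psi1 /phi1 /phi2 /= => -[h1 [h2 [h3 h4]]]; lra.
  exists ((1,0,-1) : R*R*R), 0, ((6,8,6) : R*R*R); split; first by case; lra.
  split; first by unf; lra.
  apply/near3P; exists (1/2); first lra.
  move=> q h1 h2 h3 hl; rewrite !cl_chamber; move: h1 h2 h3 hl; rewrite /= !ltr_norml.
  move=> /andP [h1 h1'] /andP [h2 h2'] /andP [h3 h3']; unf => hl.
  split; rewrite /allnn /=; unf; rewrite ?andbT; apply/and4P; split; lra.
Qed.

Lemma adj_6_6 : chambers_adjacent (@chamber_of R L3') (@chamber_of R L3') <-> edge L3' L3'.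
Proof.
by split => // -[].
Qed.

Lemma adj_6_7 : chambers_adjacent (@chamber_of R L3') (@chamber_of R L4') <-> edge L3' L4'.
Proof.
split => // _; split.
    by move=> E; have := wit_in R L3'; rewrite E; clear E; rewrite /= /psi1 /phi1 /phi2 /= => -[h1 [h2 [h3 h4]]]; lra.
  exists ((1,-1,1) : R*R*R), 0, ((2,8,6) : R*R*R); split; first by case; lra.
  split; first by unf; lra.
  apply/near3P; exists (1/2); first lra.
  move=> q h1 h2 h3 hl; rewrite !cl_chamber; move: h1 h2 h3 hl; rewrite /= !ltr_norml.
  move=> /andP [h1 h1'] /andP [h2 h2'] /andP [h3 h3']; unf => hl.
  split; rewrite /allnn /=; unf; rewrite ?andbT; apply/and4P; split; lra.
Qed.

Lemma adj_7_0 : chambers_adjacent (@chamber_of R L4') (@chamber_of R L1) <-> edge L4' L1.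
Proof.
split => // -[_ [a [c [p [a0 [ap Hn]]]]]].
  exfalso; apply: (@no_wall R _ ((0,-1,1) : R*R*R) ((1,0,0) : R*R*R) _ _ a c p a0 ap Hn); clear Hn a0 ap.
    move=> q []; rewrite !cl_chamber /allnn /=; unf; rewrite ?andbT => /and4P [h1 h2 h3 h4] /and4P [k1 k2 k3 k4]; split; lra.
  move=> [[a1 a2] a3]; unf => e1 e2 e3 e4 e5 e6.
  have z1 : a1 = 0 by lra. have z2 : a2 = 0 by lra. have z3 : a3 = 0 by lra.
  by rewrite z1 z2 z3.
Qed.

Lemma adj_7_1 : chambers_adjacent (@chamber_of R L4') (@chamber_of R L2) <-> edge L4' L2.
Proof.
split => // -[_ [a [c [p [a0 [ap Hn]]]]]].
  exfalso; apply: (@no_wall R _ ((0,-1,1) : R*R*R) ((1,0,0) : R*R*R) _ _ a c p a0 ap Hn); clear Hn a0 ap.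
    move=> q []; rewrite !cl_chamber /allnn /=; unf; rewrite ?andbT => /and4P [h1 h2 h3 h4] /and4P [k1 k2 k3 k4]; split; lra.
  move=> [[a1 a2] a3]; unf => e1 e2 e3 e4 e5 e6.
  have z1 : a1 = 0 by lra. have z2 : a2 = 0 by lra. have z3 : a3 = 0 by lra.
  by rewrite z1 z2 z3.
Qed.

Lemma adj_7_2 : chambers_adjacent (@chamber_of R L4') (@chamber_of R L3) <-> edge L4' L3.
Proof.
split => // -[_ [a [c [p [a0 [ap Hn]]]]]].
  exfalso; apply: (@no_wall R _ ((0,-1,1) : R*R*R) ((1,0,0) : R*R*R) _ _ a c p a0 ap Hn); clear Hn a0 ap.
    move=> q []; rewrite !cl_chamber /allnn /=; unf; rewrite ?andbT => /and4P [h1 h2 h3 h4] /and4P [k1 k2 k3 k4]; split; lra.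
  move=> [[a1 a2] a3]; unf => e1 e2 e3 e4 e5 e6.
  have z1 : a1 = 0 by lra. have z2 : a2 = 0 by lra. have z3 : a3 = 0 by lra.
  by rewrite z1 z2 z3.
Qed.

Lemma adj_7_3 : chambers_adjacent (@chamber_of R L4') (@chamber_of R L4) <-> edge L4' L4.
Proof.
split => // -[_ [a [c [p [a0 [ap Hn]]]]]].
  exfalso; apply: (@no_wall R _ ((0,-1,1) : R*R*R) ((1,0,0) : R*R*R) _ _ a c p a0 ap Hn); clear Hn a0 ap.
    move=> q []; rewrite !cl_chamber /allnn /=; unf; rewrite ?andbT => /and4P [h1 h2 h3 h4] /and4P [k1 k2 k3 k4]; split; lra.
  move=> [[a1 a2] a3]; unf => e1 e2 e3 e4 e5 e6.
  have z1 : a1 = 0 by lra. have z2 : a2 = 0 by lra. have z3 : a3 = 0 by lra.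
  by rewrite z1 z2 z3.
Qed.

Lemma adj_7_4 : chambers_adjacent (@chamber_of R L4') (@chamber_of R L1') <-> edge L4' L1'.
Proof.
split => // -[_ [a [c [p [a0 [ap Hn]]]]]].
  exfalso; apply: (@no_wall R _ ((0,-1,1) : R*R*R) ((1,0,-1) : R*R*R) _ _ a c p a0 ap Hn); clear Hn a0 ap.
    move=> q []; rewrite !cl_chamber /allnn /=; unf; rewrite ?andbT => /and4P [h1 h2 h3 h4] /and4P [k1 k2 k3 k4]; split; lra.
  move=> [[a1 a2] a3]; unf => e1 e2 e3 e4 e5 e6.
  have z1 : a1 = 0 by lra. have z2 : a2 = 0 by lra. have z3 : a3 = 0 by lra.
  by rewrite z1 z2 z3.
Qed.

Lemma adj_7_5 : chambers_adjacent (@chamber_of R L4') (@chamber_of R L2') <-> edge L4' L2'.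
Proof.
split => // -[_ [a [c [p [a0 [ap Hn]]]]]].
  exfalso; apply: (@no_wall R _ ((1,0,-1) : R*R*R) ((1,-1,1) : R*R*R) _ _ a c p a0 ap Hn); clear Hn a0 ap.
    move=> q []; rewrite !cl_chamber /allnn /=; unf; rewrite ?andbT => /and4P [h1 h2 h3 h4] /and4P [k1 k2 k3 k4]; split; lra.
  move=> [[a1 a2] a3]; unf => e1 e2 e3 e4 e5 e6.
  have z1 : a1 = 0 by lra. have z2 : a2 = 0 by lra. have z3 : a3 = 0 by lra.
  by rewrite z1 z2 z3.
Qed.

Lemma adj_7_6 : chambers_adjacent (@chamber_of R L4') (@chamber_of R L3') <-> edge L4' L3'.
Proof.
split => // _; split.
    by move=> E; have := wit_in R L4'; rewrite E; clear E; rewrite /= /psi1 /phi1 /phi2 /= => -[h1 [h2 [h3 h4]]]; lra.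
  exists ((1,-1,1) : R*R*R), 0, ((2,8,6) : R*R*R); split; first by case; lra.
  split; first by unf; lra.
  apply/near3P; exists (1/2); first lra.
  move=> q h1 h2 h3 hl; rewrite !cl_chamber; move: h1 h2 h3 hl; rewrite /= !ltr_norml.
  move=> /andP [h1 h1'] /andP [h2 h2'] /andP [h3 h3']; unf => hl.
  split; rewrite /allnn /=; unf; rewrite ?andbT; apply/and4P; split; lra.
Qed.

Lemma adj_7_7 : chambers_adjacent (@chamber_of R L4') (@chamber_of R L4') <-> edge L4' L4'.
Proof.
by split => // -[].
Qed.

End T.

Theorem theorem4p1 (R : realType) :
  (* the chambers are exactly the eight listed sets *)
  [set K | is_chamber K] = range (@chamber_of R) /\
  (* the eight listed sets are pairwise distinct (exactly eight chambers) *)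
  injective (@chamber_of R) /\
  (* sign vectors w.r.t. the ordered list of forms *)
  (forall (l : label) (x : R * R * R) (i : 'I_5), @chamber_of R l x ->
     if nth false (sign_vector l) i
     then 0 < pairing (nth (0, 0, 0)%Z sign_forms i) x
     else pairing (nth (0, 0, 0)%Z sign_forms i) x < 0) /\
  (* adjacency graph *)
  (forall l m : label, chambers_adjacent (@chamber_of R l) (@chamber_of R m) <-> edge l m).
Proof.
split; first exact: part1.
split; first exact: part2.
split; first exact: part3.
move=> l m; case: l; case: m.
- exact: (adj_0_0 R).
- exact: (adj_0_1 R).
- exact: (adj_0_2 R).
- exact: (adj_0_3 R).
- exact: (adj_0_4 R).
- exact: (adj_0_5 R).
- exact: (adj_0_6 R).
- exact: (adj_0_7 R).
- exact: (adj_1_0 R).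
- exact: (adj_1_1 R).
- exact: (adj_1_2 R).
- exact: (adj_1_3 R).
- exact: (adj_1_4 R).
- exact: (adj_1_5 R).
- exact: (adj_1_6 R).
- exact: (adj_1_7 R).
- exact: (adj_2_0 R).
- exact: (adj_2_1 R).
- exact: (adj_2_2 R).
- exact: (adj_2_3 R).
- exact: (adj_2_4 R).
- exact: (adj_2_5 R).
- exact: (adj_2_6 R).
- exact: (adj_2_7 R).
- exact: (adj_3_0 R).
- exact: (adj_3_1 R).
- exact: (adj_3_2 R).
- exact: (adj_3_3 R).
- exact: (adj_3_4 R).
- exact: (adj_3_5 R).
- exact: (adj_3_6 R).
- exact: (adj_3_7 R).
- exact: (adj_4_0 R).
- exact: (adj_4_1 R).
- exact: (adj_4_2 R).
- exact: (adj_4_3 R).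
- exact: (adj_4_4 R).
- exact: (adj_4_5 R).
- exact: (adj_4_6 R).
- exact: (adj_4_7 R).
- exact: (adj_5_0 R).
- exact: (adj_5_1 R).
- exact: (adj_5_2 R).
- exact: (adj_5_3 R).
- exact: (adj_5_4 R).
- exact: (adj_5_5 R).
- exact: (adj_5_6 R).
- exact: (adj_5_7 R).
- exact: (adj_6_0 R).
- exact: (adj_6_1 R).
- exact: (adj_6_2 R).
- exact: (adj_6_3 R).
- exact: (adj_6_4 R).
- exact: (adj_6_5 R).
- exact: (adj_6_6 R).
- exact: (adj_6_7 R).
- exact: (adj_7_0 R).
- exact: (adj_7_1 R).
- exact: (adj_7_2 R).
- exact: (adj_7_3 R).
- exact: (adj_7_4 R).
- exact: (adj_7_5 R).
- exact: (adj_7_6 R).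
- exact: (adj_7_7 R).
Qed.
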